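(* Let $1\le d<n$, $r=d(n-d)$, $\mathfrak C$ a maximal chain in $I(d,n)$, $\sigma=\sigma_{\mathfrak C}$, and let $1\le t\le r-1$ be such that $\sigma s_t<_R\sigma$. Then $E_t(\mathfrak C)\neq0$.
   Context: $I(d,n)$: $d$-subsets of $\{1,\dots,n\}$ as increasing sequences, ordered by $\underline i\le\underline j$ iff $i_k\le j_k$ for all $k$. Maximal chains $\underline i_r>\cdots>\underline i_0$; compared lexicographically via concatenated strings; $\mathfrak C_{\mathrm{right}}$ the smallest. Root operators $f_{s,h}$ ($1\le h\le d$, $h\le s<n-d+h$): $f_{s,h}(i_1\cdots i_d)$ replaces $i_h=s$ by $s+1$ if $i_h=s$ and ($h=d$ or $i_{h+1}\ge s+2$), else $0$. Along a maximal chain $\underline i_t=f_{s_t,h_t}(\underline i_{t-1})$, each admissible pair occurring exactly once; $\tilde f_t:=f_{s_t,h_t}$ for $\mathfrak C_{\mathrm{right}}$; $\sigma_{\mathfrak C}\in\mathsf S_r$ is defined by: the operator from $\underline i_{t-1}$ to $\underline i_t$ in $\mathfrak C$ is $\tilde f_{\sigma_{\mathfrak C}(t)}$. If the Bruhat interval $[\underline i_{t-1},\underline i_{t+1}]$ has 4 elements $\{\underline i_{t-1},\underline i_t,\underline i'_t,\underline i_{t+1}\}$ and $\underline i_t>_{lex}\underline i'_t$ (left peak), $E_t(\mathfrak C)$ is the chain with $\underline i_t$ replaced by $\underline i'_t$; otherwise $E_t(\mathfrak C)=0$. $s_t=(t,t+1)$, and $\le_R$ is the right weak Bruhat order on $\mathsf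 S_r$. *)

(* Defs.v *)
From mathcomp Require Import all_boot all_fingroup.
Set Implicit Arguments. Unset Strict Implicit. Unset Printing Implicit Defensive.

(* Elements of I(d,n): increasing sequences of length d with entries in 1..n.
   An element (i_1 ... i_d) is the seq [:: i_1; ...; i_d] (1-based values). *)
Definition inI (d n : nat) (x : seq nat) : bool :=
  [&& size x == d, sorted ltn x & all (fun k => 0 < k <= n) x].

(* Componentwise (Bruhat) order on I(d,n). *)
Definition leI (x y : seq nat) : bool := all2 leq x y.
Definition ltI (x y : seq nat) : bool := leI x y && (x != y).

Fixpoint allseqs (k n : nat) : seq (seq nat) :=
  if k is k'.+1 then [seq z :: w | z <- iota 1 n, w <- allseqs k' n] else [:: [::]].
Definition Ilist (d n : nat) : seq (seq nat) := [seq x <- allseqs d n | inI d n x].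

Definition interval (d n : nat) (a b : seq nat) : seq (seq nat) :=
  undup [seq x <- Ilist d n | leI a x && leI x b].

Fixpoint ltlex (x y : seq nat) : bool :=
  match x, y with
  | a :: x', b :: y' => (a < b) || ((a == b) && ltlex x' y')
  | [::], _ :: _ => true
  | _, _ => false
  end.
Definition lelex (x y : seq nat) : bool := (x == y) || ltlex x y.

(* A maximal chain, listed increasingly: C = [:: i_0; i_1; ...; i_r],
   so that i_t = nth [::] C t. *)
Definition is_max_chain (d n : nat) (C : seq (seq nat)) : Prop :=
  [/\ all (inI d n) C, sorted ltI C &
      forall x, inI d n x -> x \notin C ->
        exists2 y, y \in C & ~~ (leI x y || leI y x)].

(* C_right: the lexicographically smallest maximal chain, chains being compared
   via the concatenated strings i_r i_{r-1} ... i_0. *)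
Definition is_Cright (d n : nat) (C0 : seq (seq nat)) : Prop :=
  is_max_chain d n C0 /\
  forall C, is_max_chain d n C -> lelex (flatten (rev C0)) (flatten (rev C)).

Definition adm (d n s h : nat) : bool := [&& 1 <= h <= d, h <= s & s < n - d + h].

(* Root operator f_{s,h}; None stands for 0. *)
Definition froot (d s h : nat) (x : seq nat) : option (seq nat) :=
  if (nth 0 x h.-1 == s) && ((h == d) || (s + 2 <= nth 0 x h))
  then Some (set_nth 0 x h.-1 s.+1) else None.

(* sigma_C : step k (0-based; from i_k to i_{k+1}, i.e. paper's step k+1) of C
   is performed by the same operator f_{s,h} as step sigma(k) of C_right. *)
Definition is_sigma (d n r : nat) (C0 C : seq (seq nat)) (sigma : 'S_r) : Prop :=
  forall k : 'I_r, exists s h, [/\ adm d n s h,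
    froot d s h (nth [::] C k) = Some (nth [::] C k.+1) &
    froot d s h (nth [::] C0 (sigma k)) = Some (nth [::] C0 (sigma k).+1)].

(* Symmetric group: function composition u \o v (mathcomp's product is
   left-to-right: (p * q) x = q (p x)). *)
Definition scomp (r : nat) (u v : 'S_r) : 'S_r := (v * u)%g.

(* Coxeter length = number of inversions. *)
Definition plen (r : nat) (w : 'S_r) : nat :=
  #|[set p : 'I_r * 'I_r | (p.1 < p.2) && (w p.2 < w p.1)]|.

Definition leR (r : nat) (u w : 'S_r) : bool :=
  plen u + plen (scomp u^-1 w) == plen w.
Definition ltR (r : nat) (u w : 'S_r) : bool := leR u w && (u != w).

(* E_t(C), with t the paper's (1-based) index; None stands for 0. *)
Definition Et (d n t : nat) (C : seq (seq nat)) : option (seq (seq nat)) :=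
  let a := nth [::] C t.-1 in
  let m := nth [::] C t in
  let b := nth [::] C t.+1 in
  let I := interval d n a b in
  if (size I == 4) && [&& a \in I, m \in I & b \in I] then
    match [seq x <- I | x \notin [:: a; m; b]] with
    | [:: m'] => if ltlex m' m then Some (set_nth [::] C t m') else None
    | _ => None
    end
  else None.

(* Main.v *)
Require Import Defs.
From mathcomp Require Import all_boot all_fingroup.
From mathcomp Require Import zify.
Require Import Defs.
Set Implicit Arguments. Unset Strict Implicit. Unset Printing Implicit Defensive.

Lemma leIP x y : leI x y -> size x = size y /\ (forall k, nth 0 x k <= nth 0 y k).
Proof.
elim: x y => [|a x IH] [|b y] //=.
case/andP=> ab /IH [Hs H]; split; first by rewrite Hs.
by case.
Qed.

Lemma leI_of x y : size x = size y -> (forall k, nth 0 x k <= nth 0 y k) -> leI x y.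
Proof.
elim: x y => [|a x IH] [|b y] //= [] Hs H.
by rewrite (H 0) /=; apply: IH => // k; apply: (H k.+1).
Qed.

Lemma leI_trans : transitive leI.
Proof.
move=> y x z /leIP [s1 h1] /leIP [s2 h2]; apply: leI_of; first by rewrite s1.
by move=> k; apply: leq_trans (h1 k) (h2 k).
Qed.

Lemma inIP d n x : inI d n x <->
  [/\ size x = d, (forall k, k.+1 < d -> nth 0 x k < nth 0 x k.+1) &
      (forall k, k < d -> 0 < nth 0 x k <= n)].
Proof.
rewrite /inI; split.
  case/and3P=> /eqP Hs /(sortedP 0) Hso /(all_nthP 0) Ha.
  by split=> // k Hk; [apply: Hso | apply: Ha]; rewrite Hs.
case=> Hs Hso Ha; apply/and3P; split; first by rewrite Hs.
  by apply/(sortedP 0) => k; rewrite Hs; apply: Hso.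
by apply/(all_nthP 0) => k; rewrite Hs; apply: Ha.
Qed.

Definition incr (x : seq nat) p := set_nth 0 x p (nth 0 x p).+1.

Lemma nth_incr x p k : nth 0 (incr x p) k = nth 0 x k + (k == p).
Proof. by rewrite /incr nth_set_nth /=; case: eqP => [->|]; rewrite ?addn1 ?addn0. Qed.

Lemma size_incr x p : p < size x -> size (incr x p) = size x.
Proof. by move=> H; rewrite /incr size_set_nth; apply/maxn_idPr. Qed.

Lemma froot_inv d s h x y : 1 <= h -> froot d s h x = Some y ->
  nth 0 x h.-1 = s /\ y = incr x h.-1.
Proof.
rewrite /froot => h1; case: ifP => // /andP [/eqP E _] [<-].
by rewrite /incr E.
Qed.

Lemma froot_nil d s h : 1 <= h <= s -> froot d s h [::] = None.
Proof. rewrite /froot nth_nil; case: s => [|s] /andP[a b] //=; lia. Qed.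

Ltac eqc k p q := rewrite ?nth_incr;
  case: (k =P p) => [?|?]; case: (k =P q) => [?|?];
  case: (k.+1 =P p) => [?|?]; case: (k.+1 =P q) => [?|?]; simpl; lia.

Lemma nth_b a p q k : nth 0 (incr (incr a p) q) k = nth 0 a k + (k == p) + (k == q).
Proof. by rewrite !nth_incr. Qed.

Lemma incr_inI d n a p q : inI d n a -> inI d n (incr (incr a p) q) -> p < q -> q < d ->
  inI d n (incr a q).
Proof.
move=> /inIP [Sa Ha Ra] /inIP [Sb Hb Rb] pq qd.
have rd : q < size a by rewrite Sa.
apply/inIP; split; first by rewrite size_incr.
  move=> k Hk; move: (Ha k Hk) (Hb k Hk); rewrite !nth_b !nth_incr.
  eqc k p q.
move=> k Hk; move: (Ra k Hk) (Rb k Hk); rewrite !nth_b !nth_incr.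
eqc k p q.
Qed.

Lemma ltlex_nth x y p : size x = size y -> (forall k, k < p -> nth 0 x k = nth 0 y k) ->
  p < size x -> nth 0 x p < nth 0 y p -> ltlex x y.
Proof.
elim: x y p => [|a x IH] [|b y] [|p] //= [Hs] H Hp Hlt.
  by rewrite Hlt.
have ab := H 0 erefl; rewrite /= in ab; rewrite ab eqxx ltnn /=.
by apply: (IH y p) => // k Hk; apply: (H k.+1).
Qed.

Lemma square d n a p q (b := incr (incr a p) q) :
  inI d n a -> inI d n (incr a p) -> inI d n b -> p < q -> q < d ->
  [/\ inI d n (incr a q),
      forall x, inI d n x -> (leI a x && leI x b) = (x \in [:: a; incr a p; incr a q; b]),
      uniq [:: a; incr a p; incr a q; b] & ltlex (incr a q) (incr a p)].
Proof.
move=> Ia Ip Ib pq qd.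
have Iq := incr_inI Ia Ib pq qd.
have Sa : size a = d by case/inIP: Ia.
have pa : p < size a by lia.
have qa : q < size a by lia.
have Sp := size_incr pa.
have Sq := size_incr qa.
have Sb : size b = size a by rewrite /b size_incr // Sp.
split=> //.
- move=> x Ix; apply/idP/idP.
    case/andP=> /leIP [S1 H1] /leIP [S2 H2].
    have bd k : nth 0 a k <= nth 0 x k <= nth 0 a k + (k == p) + (k == q).
      by rewrite H1 -nth_b H2.
    have Ex e : size e = size a -> (forall k, nth 0 e k = nth 0 x k) -> x = e.
      by move=> Se He; apply: (@eq_from_nth _ 0) => [|k _]; [rewrite -S1 Se | rewrite He].
    have bp := bd p; have bq := bd q.
    rewrite eqxx (ltn_eqF pq) /= in bp; rewrite eqxx (gtn_eqF pq) /= in bq.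
    rewrite !inE.
    have [Ep|Lp] : nth 0 x p = nth 0 a p \/ nth 0 a p < nth 0 x p by lia.
      have [Eq|Lq] : nth 0 x q = nth 0 a q \/ nth 0 a q < nth 0 x q by lia.
        rewrite (Ex a) ?eqxx // => k; have := bd k.
        by case: (k =P p) => [?|?]; case: (k =P q) => [?|?]; subst => /=; lia.
      rewrite (Ex (incr a q)) ?eqxx ?orbT // => k; have := bd k; rewrite nth_incr.
      by case: (k =P p) => [?|?]; case: (k =P q) => [?|?]; subst => /=; lia.
    have [Eq|Lq] : nth 0 x q = nth 0 a q \/ nth 0 a q < nth 0 x q by lia.
      rewrite (Ex (incr a p)) ?eqxx ?orbT // => k; have := bd k; rewrite nth_incr.
      by case: (k =P p) => [?|?]; case: (k =P q) => [?|?]; subst => /=; lia.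
    rewrite (Ex b) ?eqxx ?orbT // => k; have := bd k; rewrite nth_b.
    by case: (k =P p) => [?|?]; case: (k =P q) => [?|?]; subst => /=; lia.
  have L1 e : size e = size a -> (forall k, nth 0 a k <= nth 0 e k <= nth 0 b k) ->
     leI a e && leI e b.
    move=> Se He; apply/andP; split; apply: leI_of => //; try by move=> k; case/andP: (He k).
    by rewrite Se.
  rewrite !inE => /or4P [] /eqP ->; apply: L1 => // k; rewrite ?nth_b ?nth_incr; lia.
- have Ne e1 e2 k : nth 0 e1 k != nth 0 e2 k -> e1 != e2.
    by apply: contra => /eqP ->.
  have pq' := ltn_eqF pq; have qp' := gtn_eqF pq.
  have n1 : a != incr a p by apply: (Ne _ _ p); rewrite ?nth_b ?nth_incr ?eqxx ?pq' ?qp' /=; lia.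
  have n2 : a != incr a q by apply: (Ne _ _ q); rewrite ?nth_b ?nth_incr ?eqxx ?pq' ?qp' /=; lia.
  have n3 : a != b by apply: (Ne _ _ p); rewrite ?nth_b ?nth_incr ?eqxx ?pq' ?qp' /=; lia.
  have n4 : incr a p != incr a q by apply: (Ne _ _ p); rewrite ?nth_b ?nth_incr ?eqxx ?pq' ?qp' /=; lia.
  have n5 : incr a p != b by apply: (Ne _ _ q); rewrite ?nth_b ?nth_incr ?eqxx ?pq' ?qp' /=; lia.
  have n6 : incr a q != b by apply: (Ne _ _ p); rewrite ?nth_b ?nth_incr ?eqxx ?pq' ?qp' /=; lia.
  by rewrite /= !inE !negb_or n1 n2 n3 n4 n5 n6.
- apply: (ltlex_nth (p := p)); rewrite ?Sp ?Sq //.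
    by move=> k Hk; rewrite !nth_incr (ltn_eqF Hk) (ltn_eqF (ltn_trans Hk pq)).
  by rewrite !nth_incr eqxx (ltn_eqF pq) /=; lia.
Qed.

Lemma allseqs_mem n x : all (fun k => 0 < k <= n) x -> x \in allseqs (size x) n.
Proof.
elim: x => [|z x IH] //= /andP [Hz Hx].
apply: allpairs_f; last exact: IH.
by rewrite mem_iota; lia.
Qed.

Lemma mem_interval d n a b x :
  (x \in interval d n a b) = [&& inI d n x, leI a x & leI x b].
Proof.
have E : (x \in Ilist d n) = inI d n x.
  rewrite /Ilist mem_filter; case Ix: (inI d n x) => //=.
  by case/and3P: Ix => /eqP <- _; apply: allseqs_mem.
by rewrite /interval mem_undup mem_filter E andbC.
Qed.

Lemma uniq_single (T : eqType) (s : seq T) y : uniq s -> s =i [:: y] -> s = [:: y].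
Proof.
move=> U E.
have := @uniq_size_uniq _ [:: y] s erefl (fun z => esym (E z)); rewrite U => /esym /eqP.
case: s U E => [|z [|]] //= _ E _.
by have := E z; rewrite !inE eqxx => /esym /eqP ->.
Qed.

Lemma Et_some d n t C a p q :
  inI d n a -> inI d n (incr a p) -> inI d n (incr (incr a p) q) -> p < q -> q < d ->
  nth [::] C t.-1 = a -> nth [::] C t = incr a p -> nth [::] C t.+1 = incr (incr a p) q ->
  Et d n t C <> None.
Proof.
move=> Ia Ip Ib pq qd Ea Em Eb.
have [Iq Hint U L] := square Ia Ip Ib pq qd.
set m := incr a p in Ip Em Hint U L *; set m' := incr a q in Iq Hint U L *.
set b := incr m q in Ib Eb Hint U *.
rewrite /Et Ea Em Eb.
set I := interval d n a b.
have EI : [:: a; m; m'; b] =i I.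
  move=> x; rewrite /I mem_interval.
  case Ix: (inI d n x); first by rewrite /= -Hint.
  rewrite /=; apply/negbTE; rewrite !inE; apply/negP => /or4P [] /eqP E; subst x;
    by rewrite ?Ia ?Ip ?Iq ?Ib in Ix.
have UI : uniq I by rewrite /I /interval undup_uniq.
have SI : size I == 4 by rewrite -(uniq_size_uniq U EI).
have mI x : x \in [:: a; m; m'; b] -> x \in I by rewrite EI.
rewrite SI !mI ?inE ?eqxx ?orbT //=.
have -> : [seq x <- I | x \notin [:: a; m; b]] = [:: m'].
  apply: uniq_single; first by rewrite filter_uniq.
  move=> x; rewrite mem_filter -EI !inE.
  move: U; rewrite /= !inE !negb_or !andbT.
  case: (x =P m') => [->|ne].
    by case/and3P => /and3P [n1 n2 n3] /andP [n4 n5] n6; rewrite (eq_sym m' a) (eq_sym m' m) n2 n4 n6 /= !orbT.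
  move=> _.
  idtac.
  by case: (x =P a); case: (x =P m); case: (x =P b).
by rewrite L.
Qed.

Lemma ltlex_irr x : ltlex x x = false.
Proof. by elim: x => //= a x ->; rewrite ltnn eqxx. Qed.

Lemma ltlex_asym x y : ltlex x y -> ltlex y x -> False.
Proof.
elim: x y => [|a x IH] [|b y] //=.
move=> /orP [ab|/andP [/eqP eab H1]] /orP [ba|/andP [/eqP eba H2]]; try lia.
exact: IH H1 H2.
Qed.

Lemma ltlex_catl P u v : ltlex (P ++ u) (P ++ v) = ltlex u v.
Proof. by elim: P => //= a P ->; rewrite ltnn eqxx. Qed.

Lemma ltlex_catr u v X Y : size u = size v -> ltlex u v -> ltlex (u ++ X) (v ++ Y).
Proof.
elim: u v => [|a u IH] [|b v] //= [] Hs /orP [->//|/andP [-> H]].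
by rewrite (IH v) ?orbT.
Qed.

Lemma step_size d n C k s h : adm d n s h ->
  froot d s h (nth [::] C k) = Some (nth [::] C k.+1) -> k.+1 < size C.
Proof.
case/and3P=> /andP [h1 hd] hs _ F.
case: (ltnP k (size C)) => Hk; last first.
  by move: F; rewrite nth_default // froot_nil // h1.
case: (ltnP k.+1 (size C)) => // Hk1.
case: (froot_inv h1 F) => _; rewrite (nth_default _ Hk1) /incr => E.
by move: E => /(congr1 size); rewrite size_set_nth /=; lia.
Qed.

Lemma sq_incomp a p q : p < q -> ~~ (leI (incr a p) (incr a q) || leI (incr a q) (incr a p)).
Proof.
move=> pq; rewrite negb_or; apply/andP; split; apply/negP => /leIP [_ H].
  by move: (H p); rewrite !nth_incr eqxx (ltn_eqF pq); lia.
by move: (H q); rewrite !nth_incr eqxx (gtn_eqF pq); lia.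
Qed.

Lemma no_ascent d n C0 k s h s' h' : is_Cright d n C0 -> adm d n s h -> adm d n s' h' ->
  froot d s h (nth [::] C0 k) = Some (nth [::] C0 k.+1) ->
  froot d s' h' (nth [::] C0 k.+1) = Some (nth [::] C0 k.+2) -> h' <= h.
Proof.
case=> [[Call Csort Cmax] Cmin] Ha Ha' F1 F2.
rewrite leqNgt; apply/negP => hh'.
have h1 : 1 <= h by case/and3P: Ha => /andP [].
have hd' : h' <= d by case/and3P: Ha' => /andP [].
have Sk2 := step_size Ha' F2.
have Sk1 : k.+1 < size C0 by lia.
have Sk : k < size C0 by lia.
set a := nth [::] C0 k in F1.
set p := h.-1; set q := h'.-1.
have pq : p < q by rewrite /p /q; lia.
have qd : q < d by rewrite /q; lia.
case: (froot_inv h1 F1) => _ Em.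
case: (froot_inv (leq_trans h1 (ltnW hh')) F2) => _.
rewrite Em -/p -/q => Eb.
have InC j : j < size C0 -> inI d n (nth [::] C0 j) by move=> Hj; apply: (allP Call); rewrite mem_nth.
have Ia : inI d n a by apply: InC.
have Im : inI d n (incr a p) by rewrite -Em; apply: InC.
have Ib : inI d n (incr (incr a p) q) by rewrite -Eb; apply: InC.
have [Iq Hint U L] := square Ia Im Ib pq qd.
set m := incr a p in Em Im Hint U L *; set m' := incr a q in Iq Hint U L *.
set b := incr m q in Eb Ib Hint U *.
set C' := set_nth [::] C0 k.+1 m'.
have D0 : C0 = take k.+1 C0 ++ m :: drop k.+2 C0 by rewrite -Em -drop_nth // cat_take_drop.
have D' : C' = take k.+1 C0 ++ m' :: drop k.+2 C0 by rewrite /C' set_nthE Sk1.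
have SC' : size C' = size C0 by rewrite /C' size_set_nth; apply/maxn_idPr.
have nC' j : nth [::] C' j = if j == k.+1 then m' else nth [::] C0 j.
  by rewrite /C' nth_set_nth.
have Lfour x : x \in [:: a; m; m'; b] -> inI d n x -> leI a x && leI x b.
  by move=> Hx Ix; rewrite Hint.
have [am' m'b] : leI a m' /\ leI m' b by apply/andP/Lfour; rewrite ?inE ?eqxx ?orbT.
have [am mb] : leI a m /\ leI m b by apply/andP/Lfour; rewrite ?inE ?eqxx ?orbT.
move: (U); rewrite /= !inE !negb_or !andbT.
case/and3P => /and3P [n1 n2 n3] /andP [n4 n5] n6.
have aC' : a \in C' by have := nC' k; rewrite (ltn_eqF (ltnSn k)) -/a => <-; rewrite mem_nth // SC'.
have bC' : b \in C'.
  by rewrite -Eb; have := nC' k.+2; rewrite (gtn_eqF (ltnSn k.+1)) => <-; rewrite mem_nth // SC'.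
have m'C' : m' \in C' by have := nC' k.+1; rewrite eqxx => <-; rewrite mem_nth // SC'.
have mC0 : m \in C0 by rewrite -Em mem_nth.
have memC0 y : y \in C0 -> y = m \/ y \in C'.
  rewrite D0 D' !mem_cat !inE => /or3P [->|/eqP ->|->]; rewrite ?orbT; by [right|left|right].
have maxC' : is_max_chain d n C'.
  split.
  - apply/allP => x; rewrite D' mem_cat inE => /or3P [H|/eqP ->|H] //.
      by apply: (allP Call); apply: mem_take H.
    by apply: (allP Call); apply: mem_drop H.
  - apply/(sortedP [::]) => j; rewrite SC' => Hj; rewrite !nC'.
    case: (j =P k.+1) => [->|Hjk].
      by rewrite (gtn_eqF (ltnSn k.+1)) -/m' Eb /ltI m'b n6.
    case: (j.+1 =P k.+1) => [[->]|Hjk1].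
      by rewrite /ltI am' n2.
    by move/(sortedP [::]): Csort; apply.
  - move=> x Ix xC'.
    have nxm' : x != m' by apply: contraNneq xC' => ->.
    case xC0: (x \in C0).
      case: (memC0 x xC0) => [Ex|]; last by rewrite (negbTE xC').
      by exists m' => //; rewrite Ex; apply: sq_incomp.
    have [y yC0 Hy] := Cmax x Ix (negbT xC0).
    case: (memC0 y yC0) => [Ey|]; last by exists y.
    rewrite Ey in Hy.
    case Hxa: (leI x a || leI a x); last by exists a => //; rewrite Hxa.
    case Hxb: (leI x b || leI b x); last by exists b => //; rewrite Hxb.
    exfalso.
    have ax : leI a x.
      case/orP: Hxa => // xa; move: Hy; rewrite (leI_trans xa am) //.
    have xb : leI x b.
      case/orP: Hxb => // bx; move: Hy; rewrite (leI_trans mb bx) orbT //.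
    move: (Hint x Ix); rewrite ax xb !inE => /esym /or4P [] /eqP Ex.
    + by move: xC'; rewrite Ex aC'.
    + by move: xC0; rewrite Ex mC0.
    + by move: nxm'; rewrite Ex eqxx.
    + by move: xC'; rewrite Ex bC'.
have lt : ltlex (flatten (rev C')) (flatten (rev C0)).
  have -> : flatten (rev C0) = flatten (rev (take k.+1 C0 ++ m :: drop k.+2 C0)) by rewrite -D0.
  rewrite D' !rev_cat !rev_cons -!cats1 !flatten_cat /= !cats0 -!catA ltlex_catl.
  apply: ltlex_catr => //.
  by case/and3P: Iq => /eqP -> _ _; case/and3P: Im => /eqP -> _ _.
have := Cmin C' maxC'; rewrite /lelex => /orP [/eqP E|H].
  by rewrite E ltlex_irr in lt.
exact: ltlex_asym lt H.
Qed.

Lemma tperm_mono r (i j x y : 'I_r) : val j = (val i).+1 -> x < y -> ~ (x = i /\ y = j) ->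
  tperm i j x < tperm i j y.
Proof.
move=> ij0 xy nij.
have ij : nat_of_ord j = (nat_of_ord i).+1 := ij0; clear ij0.
have V (u v : 'I_r) : u <> v -> nat_of_ord u <> nat_of_ord v by move=> H E; apply: H; apply: val_inj.
case: tpermP => [Ex|Ex|nxi nxj]; case: tpermP => [Ey|Ey|nyi nyj]; subst => //;
  try (have := V _ _ nxi); try (have := V _ _ nxj); try (have := V _ _ nyi); try (have := V _ _ nyj);
  try lia.
by exfalso; apply: nij.
Qed.

Lemma descent r (sg : 'S_r) (i j : 'I_r) : val j = (val i).+1 ->
  ltR (scomp sg (tperm i j)) sg -> sg j < sg i.
Proof.
move=> ij0 /andP [/eqP H _].
have ij : nat_of_ord j = (nat_of_ord i).+1 := ij0; clear ij0.
rewrite ltnNge leq_eqVlt; apply/negP => /orP [/eqP E|lt].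
  have : i = j by apply: (perm_inj (s := sg)); apply: val_inj.
  by move=> E2; move: ij; rewrite E2; lia.
have E1 : scomp (scomp sg (tperm i j))^-1 sg = tperm i j.
  by rewrite /scomp invMg tpermV mulgA mulgV mul1g.
rewrite E1 in H.
have P1 : 0 < plen (tperm i j).
  apply/card_gt0P; exists (i, j); rewrite inE /= tpermL tpermR; lia.
set u := scomp sg (tperm i j) in H.
have P2 : plen sg <= plen u.
  rewrite /plen.
  set A := [set p : 'I_r * 'I_r | (p.1 < p.2) && (sg p.2 < sg p.1)].
  set B := [set p : 'I_r * 'I_r | (p.1 < p.2) && (u p.2 < u p.1)].
  pose f := fun p : 'I_r * 'I_r => (tperm i j p.1, tperm i j p.2).
  have finj : injective f.
    by move=> [x y] [x' y'] [] /(congr1 (tperm i j)); rewrite !tpermK => -> /(congr1 (tperm i j)); rewrite !tpermK => ->.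
  rewrite -(card_imset A finj); apply: subset_leq_card.
  apply/subsetP => _ /imsetP [[x y] + ->]; rewrite !inE /= => /andP [xy syx].
  rewrite /u /scomp !permM !tpermK syx andbT.
  apply: tperm_mono => // -[Ex Ey]; subst; lia.
move: H => /eqP; lia.
Qed.

Theorem proposition2p31 (d n : nat) (C0 C : seq (seq nat))
    (sigma : 'S_(d * (n - d))) (i j : 'I_(d * (n - d))) :
  1 <= d < n ->
  is_Cright d n C0 ->
  is_max_chain d n C ->
  is_sigma d n C0 C sigma ->
  val j = (val i).+1 ->
  ltR (scomp sigma (tperm i j)) sigma ->
  Et d n (val i).+1 C <> None.
Proof.
move=> dn Cr Cm Hsig ij Hlt.
have desc := descent ij Hlt.
have ij' : nat_of_ord j = (nat_of_ord i).+1 := ij.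
have Cr' := Cr; case: Cr' => [[C0all C0sort _] _].
case: Cm => [Call Csort _].
have exstep p : p < d * (n - d) -> exists s h, adm d n s h /\
    froot d s h (nth [::] C0 p) = Some (nth [::] C0 p.+1).
  move=> Hp; have [s [h [A _ G]]] := Hsig (sigma^-1 (Ordinal Hp))%g.
  by rewrite permKV in G; exists s, h.
have mono q p : q < p < d * (n - d) -> forall s h s' h', adm d n s h ->
    froot d s h (nth [::] C0 q) = Some (nth [::] C0 q.+1) -> adm d n s' h' ->
    froot d s' h' (nth [::] C0 p) = Some (nth [::] C0 p.+1) -> h' <= h.
  elim: p => [|p IH] //; move=> /andP [qp pr] s h s' h' A F A' F'.
  case: (q =P p) => [Eq|Nq].
    by subst; exact: no_ascent Cr A A' F F'.
  have [s'' [h'' [A'' F'']]] := exstep p (ltnW pr).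
  have H1 : q < p < d * (n - d) by apply/andP; split; lia.
  have := IH H1 s h s'' h'' A F A'' F''.
  have := no_ascent Cr A'' A' F'' F'; lia.
have [s1 [h1 [A1 F1 G1]]] := Hsig i.
have [s2 [h2 [A2 F2 G2]]] := Hsig j.
rewrite ij' in F2.
have h1p : 1 <= h1 by case/and3P: A1 => /andP [].
have h2p : 1 <= h2 by case/and3P: A2 => /andP [].
have h2d : h2 <= d by case/and3P: A2 => /andP [].
have S2 := step_size A2 F2.
have InC k : k < size C -> inI d n (nth [::] C k) by move=> Hk; apply: (allP Call); rewrite mem_nth.
case: (froot_inv h1p F1) => Es1 Em.
case: (froot_inv h2p F2) => Es2 Eb.
case: (ltngtP h1 h2) => Hh.
- rewrite Em in Eb.
  apply: (Et_some (a := nth [::] C i) (p := h1.-1) (q := h2.-1)) => //.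
  + by apply: InC; lia.
  + by rewrite -Em; apply: InC; lia.
  + by rewrite -Eb; apply: InC.
  + lia.
  + lia.
- have := mono _ _ (introT andP (conj desc (ltn_ord _))) _ _ _ _ A2 G2 A1 G1; lia.
- subst h2.
  have Hs : s2 = s1.+1 by rewrite -Es2 Em nth_incr eqxx Es1 addn1.
  have Si := step_size A1 G1.
  have sub : subrel ltI leI by move=> x y /andP [].
  have := sorted_ltn_nth leI_trans [::] (sub_sorted sub C0sort).
  move=> /(_ (sigma j) (sigma i)) H.
  have : leI (nth [::] C0 (sigma j)) (nth [::] C0 (sigma i)).
    by apply: H => //; rewrite inE; lia.
  case/leIP => _ /(_ h1.-1).
  case: (froot_inv h1p G1) => -> _; case: (froot_inv h1p G2) => -> _; lia.
Qed.
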